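(* Let $M$ be a paving matroid of rank $r \ge 3$, let $S = \{s_1,\dots,s_r\}$ be a basis of $M$, and let $e_1 e_2\cdots e_m$ (with $m \ge r$) be a cyclic ordering of $M\backslash S$, i.e., any $r$ cyclically consecutive elements form a basis of $M$. Suppose that for every $i \in \{1,\dots,m\}$ and every permutation $\pi$ of $\{1,\dots,r\}$, the sequence $e_1\cdots e_i\, s_{\pi(1)}\cdots s_{\pi(r)}\, e_{i+1}\cdots e_m$ is not a cyclic ordering of $M$. Fix $j \in \{1,\dots,m\}$, let $x_t = e_{j-t}$ and $y_t = e_{j+t-1}$ for $t = 1,\dots,r-1$ (indices taken modulo $m$ in $\{1,\dots,m\}$). Let $\mathcal{H}_1$ be the set of all $C \cap S$ where $C$ is a circuit of $M$ with $|C| = r$ and $\{x_1,\dots,x_i\} \subset C \subseteq \{x_1,\dots,x_i\} \cup S$ for some $i \in \{1,\dots,r-1\}$, and let $\mathcal{H}_2$ be the set of all $C\cap S$ where $C$ is a circuit with $|C|=r$ and $\{y_1,\dots,y_i\} \subset C \subseteq \{y_1,\dots,y_i\}\cup S$ for some $i\in\{1,\dots,r-1\}$. Then $(\mathcal{H}_1,\mathcal{H}_2)$ is an $S$-pair which is order consistent with respect to $S$.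
   Context: A matroid $M$ of rank $r$ is a paving matroid if every circuit has at least $r$ elements. Let $S$ be a finite nonempty set and $\mathcal{S}_1, \mathcal{S}_2 \subseteq 2^S$. The pair $(\mathcal{S}_1,\mathcal{S}_2)$ is an $S$-pair if: (S1) for $i=1,2$, if $A,B \in \mathcal{S}_i$ with $B \subset A$ and $|A| = |B|+1$, then every $|B|$-element subset of $A$ lies in $\mathcal{S}_i$; (S2) for $i=1,2$, if $A,B \in \mathcal{S}_i$ with $|A|=|B|$ and $|A\cap B| = |A|-1$, then $A\cup B \in \mathcal{S}_i$; (S3) for $i=1,2$, not every singleton $\{s\}$, $s\in S$, lies in $\mathcal{S}_i$, and $S \notin \mathcal{S}_i$; (S4) for $k = 1,\dots,|S|-1$ and $x\in S$, if every $k$-element subset of $S - x$ lies in $\mathcal{S}_1$, then not every $(|S|-k)$-element subset of $S-x$ lies in $\mathcal{S}_2$. The pair $(\mathcal{S}_1,\mathcal{S}_2)$ is order consistent with respect to $S$ (where $|S|=n$) if for every ordering $s_1 s_2\cdots s_n$ of $S$ there exists $i\in\{1,\dots,n\}$ such that $\{s_1,\dots,s_i\} \in \mathcal{S}_1$ or $\{s_i,\dots,s_n\} \in \mathcal{S}_2$. *)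

(* Defs.v *)
From mathcomp Require Import all_boot.
Set Implicit Arguments. Unset Strict Implicit. Unset Printing Implicit Defensive.

Record matroid (T : finType) := Matroid {
  indep : pred {set T};
  indep0 : indep set0;
  indep_sub : forall A B : {set T}, B \subset A -> indep A -> indep B;
  indep_aug : forall A B : {set T}, indep A -> indep B -> #|A| < #|B| ->
     exists2 x, x \in B :\: A & indep (x |: A) }.

Section Matroid.
Variables (T : finType) (M : matroid T).

Definition basis (B : {set T}) : bool :=
  indep M B && [forall X : {set T}, (B \proper X) ==> ~~ indep M X].

Definition rank : nat := \max_(X : {set T} | indep M X) #|X|.

Definition circuit (C : {set T}) : bool :=
  ~~ indep M C && [forall x in C, indep M (C :\ x)].

Definition paving : Prop := forall C, circuit C -> rank <= #|C|.

Definition cyclic_ordering (X : {set T}) (s : seq T) : Prop :=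
  [/\ uniq s, [set x in s] = X &
      forall k, k < size s -> basis [set x in take rank (rot k s)]].

Definition Hfam (S : {set T}) (xs : seq T) : {set {set T}} :=
  [set D : {set T} | [exists C : {set T},
     [&& circuit C, #|C| == rank, D == C :&: S &
         [exists i : 'I_rank, (0 < (i : nat)) &&
            ([set x in take i xs] \proper C) &&
            (C \subset [set x in take i xs] :|: S)]]]].
End Matroid.

Section Spair.
Variable (T : finType).

Definition spair (S : {set T}) (S1 S2 : {set {set T}}) : Prop :=
  [/\ (S1 \subset powerset S) && (S2 \subset powerset S),
  (forall Si, Si = S1 \/ Si = S2 ->
     forall A B : {set T}, A \in Si -> B \in Si -> B \proper A -> #|A| = #|B|.+1 ->
     forall D : {set T}, D \subset A -> #|D| = #|B| -> D \in Si),
  (forall Si, Si = S1 \/ Si = S2 ->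
     forall A B : {set T}, A \in Si -> B \in Si -> #|A| = #|B| ->
     #|A :&: B|.+1 = #|A| -> A :|: B \in Si),
  (forall Si, Si = S1 \/ Si = S2 ->
     ~ (forall s, s \in S -> [set s] \in Si) /\ S \notin Si) &
  (forall k x, 1 <= k <= #|S| - 1 -> x \in S ->
     (forall D : {set T}, D \subset S :\ x -> #|D| = k -> D \in S1) ->
     ~ (forall D : {set T}, D \subset S :\ x -> #|D| = #|S| - k -> D \in S2))].

Definition order_consistent (S : {set T}) (S1 S2 : {set {set T}}) : Prop :=
  forall s : seq T, uniq s -> [set x in s] = S ->
    exists2 i, 1 <= i <= size s &
      [set x in take i s] \in S1 \/ [set x in drop i.-1 s] \in S2.
End Spair.

(* Main.v *)
Require Import Defs.
From mathcomp Require Import all_boot zify.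
From Stdlib Require Import Classical.
Set Implicit Arguments. Unset Strict Implicit. Unset Printing Implicit Defensive.

Lemma rank_indep (T : finType) (M : matroid T) A : indep M A -> #|A| <= rank M.
Proof. by move=> h; rewrite /rank; exact: (leq_bigmax_cond A h). Qed.

Lemma rank_ex (T : finType) (M : matroid T) : exists2 A, indep M A & #|A| = rank M.
Proof.
have h0 : 0 < #|indep M| by apply/card_gt0P; exists set0; exact: indep0.
have [A hA hE] := @eq_bigmax_cond _ (indep M) (fun X : {set T} => #|X|) h0.
by exists A => //; rewrite /rank -hE.
Qed.

Lemma rank_basis (T : finType) (M : matroid T) B : basis M B -> #|B| = rank M.
Proof.
case/andP=> hB /forallP hmax; apply/eqP; rewrite eqn_leq rank_indep //=.
rewrite leqNgt; apply/negP=> hlt.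
have [A hA hAc] := rank_ex M.
have hl : #|B| < #|A| by rewrite hAc.
have [x /setDP [_ xB] hx] := indep_aug hB hA hl.
have hp : B \proper x |: B by rewrite properEcard subsetUr cardsU1 xB /= add1n ltnSn.
by have := hmax (x |: B); rewrite hx hp.
Qed.

Lemma indep_basis (T : finType) (M : matroid T) B : indep M B -> #|B| = rank M -> basis M B.
Proof.
move=> hB hc; rewrite /basis hB /=; apply/forallP=> X; apply/implyP=> hp.
apply/negP=> hX; have := rank_indep hX; have := proper_card hp; lia.
Qed.

Lemma small_indep (T : finType) (M : matroid T) : paving M ->
  forall A : {set T}, #|A| < rank M -> indep M A.
Proof.
move=> hp A; move: {2}#|A| (leqnn #|A|) => n; elim: n A => [|n IH] A hA hr.
  by move: hA; rewrite leqn0 cards_eq0 => /eqP ->; exact: indep0.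
case hi: (indep M A) => //.
have hc : circuit M A.
  rewrite /circuit hi /=; apply/forallP=> x; apply/implyP=> xA.
  apply: IH; last by have := subset_leq_card (subD1set A x); lia.
  by move: hA; rewrite (cardsD1 x A) xA.
by have := hp _ hc; lia.
Qed.

Lemma degen (T : finType) (M : matroid T) (Z V : {set T}) :
  indep M Z -> #|Z|.+1 = rank M ->
  (forall v, v \in V -> v \notin Z -> ~~ indep M (v |: Z)) ->
  forall I : {set T}, I \subset V -> #|I| = rank M -> ~~ indep M I.
Proof.
move=> hZ hc hV I hI hIc; apply/negP=> hi.
have hl : #|Z| < #|I| by rewrite hIc -hc.
have [x /setDP [xI xZ] hx] := indep_aug hZ hi hl.
by move: (hV x (subsetP hI x xI) xZ); rewrite hx.
Qed.

Lemma cardsU_disj (T : finType) (A B : {set T}) : A :&: B = set0 -> #|A :|: B| = #|A| + #|B|.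
Proof. by move=> h; rewrite cardsU h cards0 subn0. Qed.

Lemma cardTake (T : finType) (xs : seq T) n : uniq xs -> n <= size xs ->
  #|[set x in take n xs]| = n.
Proof.
move=> hu hn; rewrite cardsE; have /card_uniqP -> := take_uniq n hu.
exact: size_takel.
Qed.

Lemma X_disj (T : finType) (S D : {set T}) (xs : seq T) n :
  {in xs, forall x, x \notin S} -> D \subset S -> [set x in take n xs] :&: D = set0.
Proof.
move=> hd hDS; apply/setP=> y; rewrite !inE; apply/negP=> /andP [yx yD].
by move: (hd y (mem_take yx)); rewrite (subsetP hDS y yD).
Qed.

Lemma Hfam_P (T : finType) (M : matroid T) (S : {set T}) (xs : seq T) :
  paving M -> uniq xs -> {in xs, forall x, x \notin S} -> rank M <= size xs ->
  forall D, D \in Hfam M S xs = [&& D \subset S, 0 < #|D|, #|D| < rank M &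
    ~~ indep M ([set x in take (rank M - #|D|) xs] :|: D)].
Proof.
move=> hp hu hd hs D; apply/idP/idP.
  rewrite inE => /existsP [C /and4P [hC /eqP hCr /eqP -> /existsP [i /andP [/andP [i0 hprop] hsub]]]].
  set X := [set x in take i xs] in hprop hsub *.
  have hXc : #|X| = i by apply: cardTake => //; have := ltn_ord i; lia.
  have hdj : X :&: (C :&: S) = set0 by exact: (X_disj _ hd (subsetIr C S)).
  have hCe : C = X :|: (C :&: S).
    apply/setP=> y; rewrite !inE; apply/idP/idP.
      move=> yC; case yS: (y \in S); first by rewrite yC orbT.
      by rewrite andbF orbF; move: (subsetP hsub y yC); rewrite !inE yS orbF.
    case/orP=> [yX|/andP [] //]; apply: (subsetP (proper_sub hprop)); by rewrite inE.
  have hDc : #|C :&: S| = rank M - i.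
    by move: hCr; rewrite {1}hCe cardsU_disj // hXc; lia.
  rewrite subsetIr hDc /=.
  have hi := ltn_ord i.
  apply/and3P; split; try lia.
  have -> : rank M - (rank M - i) = i by lia.
  by rewrite -hCe; case/andP: hC.
case/and4P=> hDS hD0 hDr hdep.
set i := rank M - #|D|.
set X := [set x in take i xs] in hdep *.
have hXc : #|X| = i by apply: cardTake => //; lia.
have hdj : X :&: D = set0 by exact: (X_disj _ hd hDS).
have hCc : #|X :|: D| = rank M by rewrite cardsU_disj // hXc; lia.
rewrite inE; apply/existsP; exists (X :|: D); apply/and4P; split.
- rewrite /circuit hdep /=; apply/forallP=> y; apply/implyP=> yC.
  apply: small_indep => //; move: hCc; rewrite (cardsD1 y) yC; lia.
- by rewrite hCc.
- apply/eqP/setP=> y; rewrite !inE; apply/idP/idP.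
    by move=> yD; rewrite yD orbT (subsetP hDS y yD).
  case/andP=> /orP [yX|//] yS.
  by move: (hd y (mem_take yX)); rewrite yS.
- have hir : i < rank M by lia.
  apply/existsP; exists (Ordinal hir) => /=; rewrite -/X.
  apply/andP; split; first (apply/andP; split).
  + rewrite /i; lia.
  + by rewrite properEcard subsetUl hCc hXc /i; lia.
  + by apply: setUS.
Qed.

Lemma take_sub (T : finType) (xs : seq T) n m : n <= m ->
  [set x in take n xs] \subset [set x in take m xs].
Proof.
move=> h; apply/subsetP=> y; rewrite !inE -(take_takel xs h); exact: mem_take.
Qed.

Lemma take_succ (T : finType) (xs : seq T) n x0 : n < size xs ->
  [set x in take n.+1 xs] = nth x0 xs n |: [set x in take n xs].
Proof.
by move=> h; apply/setP=> y; rewrite (take_nth x0 h) !inE mem_rcons inE.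
Qed.

Lemma add_eq (T : finType) (A B : {set T}) v : v \in A -> B \subset A ->
  #|A| = #|B|.+1 -> v \notin B -> v |: B = A.
Proof.
move=> vA hBA hc vB; apply/eqP; rewrite eqEcard cardsU1 vB hc /= leqnn andbT.
by rewrite subUset sub1set vA hBA.
Qed.


Lemma S1_lem (T : finType) (M : matroid T) (S : {set T}) (xs : seq T) :
  paving M -> uniq xs -> {in xs, forall x, x \notin S} -> rank M <= size xs ->
  forall A B : {set T}, A \in Hfam M S xs -> B \in Hfam M S xs -> B \proper A -> #|A| = #|B|.+1 ->
  forall D : {set T}, D \subset A -> #|D| = #|B| -> D \in Hfam M S xs.
Proof.
move=> hp hu hd hs A B hA hB hBA hAc D hDA hDc.
move: hA hB; rewrite !(Hfam_P hp hu hd hs) => /and4P [hAS hA0 hAr hAd] /and4P [hBS hB0 hBr hBd].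
have hDS : D \subset S by exact: subset_trans hDA hAS.
rewrite hDS hDc hB0 hBr /=.
set k := #|B| in hAc hDc hB0 hBr hBd *.
set n := rank M - k.+1.
have hn : rank M - k = n.+1 by rewrite /n; lia.
move: hAd; rewrite hAc -/n => hAd.
rewrite hn in hBd *.
have hns : n < size xs by lia.
have x0 : T by case: (xs) hns => [|y ys] //; exact: y.
have hXs := take_succ x0 hns.
set x := nth x0 xs n in hXs.
set Xn := [set y in take n xs] in hXs hAd *.
set Xn1 := [set y in take n.+1 xs] in hXs hBd *.
have hXnc : #|Xn| = n.
rewrite /Xn; apply: cardTake => //; lia.
have hXn1c : #|Xn1| = n.+1 by rewrite /Xn1; apply: cardTake => //; lia.
have dj1 : Xn :&: B = set0 by exact: (X_disj _ hd hBS).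
have dj2 : Xn1 :&: D = set0 by exact: (X_disj _ hd hDS).
have xXn : x \notin Xn.
  apply/negP=> hx; move: hXn1c; rewrite hXs cardsU1 hx hXnc; lia.
apply: (@degen _ M (Xn :|: B) (Xn1 :|: A)).
- apply: small_indep => //; rewrite cardsU_disj //; lia.
- rewrite cardsU_disj //; lia.
- move=> v /setUP [vX | vA]; rewrite in_setU negb_or => /andP [vXn vB].
    have vx : v = x by move: vX; rewrite hXs in_setU (negbTE vXn) orbF => /set1P.
    by rewrite vx setUA -hXs.
  by rewrite setUCA (add_eq vA (proper_sub hBA) hAc vB).
- by apply: setUS.
- by rewrite cardsU_disj //; lia.
Qed.

Lemma S2_lem (T : finType) (M : matroid T) (S : {set T}) (xs : seq T) :
  paving M -> basis M S -> uniq xs -> {in xs, forall x, x \notin S} -> rank M <= size xs ->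
  forall A B : {set T}, A \in Hfam M S xs -> B \in Hfam M S xs -> #|A| = #|B| ->
     #|A :&: B|.+1 = #|A| -> A :|: B \in Hfam M S xs.
Proof.
move=> hp hSb hu hd hs A B hA hB hAB hI.
have hSc := rank_basis hSb.
move: hA hB; rewrite !(Hfam_P hp hu hd hs) => /and4P [hAS hA0 hAr hAd] /and4P [hBS hB0 hBr hBd].
rewrite -hAB in hBd.
set k := #|A| in hAB hI hA0 hAr hAd hBd *.
set X := [set y in take (rank M - k) xs] in hAd hBd *.
have hXc : #|X| = rank M - k by rewrite /X; apply: cardTake => //; lia.
have hUS : A :|: B \subset S by rewrite subUset hAS hBS.
have hUc : #|A :|: B| = k.+1 by rewrite cardsU -hAB; lia.
have djI : X :&: (A :&: B) = set0 by apply: (X_disj _ hd); exact: subset_trans (subsetIl _ _) hAS.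
have hdeg := @degen _ M (X :|: (A :&: B)) (X :|: (A :|: B)).
have hdeg' : forall I : {set T}, I \subset X :|: (A :|: B) -> #|I| = rank M -> ~~ indep M I.
  apply: hdeg.
  - apply: small_indep => //; rewrite cardsU_disj //; lia.
  - rewrite cardsU_disj //; lia.
  - move=> v /setUP [vX | vAB]; rewrite in_setU negb_or => /andP [vXn vI].
      by rewrite vX in vXn.
    case/setUP: vAB => [vA | vB].
    + have vB : v \notin B by move: vI; rewrite in_setI vA.
      have c1 : #|A| = #|A :&: B|.+1 by lia.
      have n1 : v \notin A :&: B by rewrite in_setI negb_and vB orbT.
      by rewrite setUCA (add_eq vA (subsetIl _ _) c1 n1).
    + have vA : v \notin A by move: vI; rewrite in_setI vB andbT.
      have c1 : #|B| = #|A :&: B|.+1 by lia.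
      have n1 : v \notin A :&: B by rewrite in_setI negb_and vA.
      by rewrite setUCA (add_eq vB (subsetIr _ _) c1 n1).
have hkr : k.+1 < rank M.
  have hle := subset_leq_card hUS.
  rewrite ltn_neqAle; apply/andP; split; last by rewrite -hUc -hSc.
  apply/negP=> /eqP hk.
  have hUe : A :|: B = S by apply/eqP; rewrite eqEcard hUS hSc hUc hk /=.
  have := hdeg' (A :|: B) (subsetUr _ _); rewrite hUc hk => /(_ erefl).
  by rewrite hUe; case/andP: hSb => ->.
rewrite hUS hUc hkr /=.
apply: hdeg'.
- by apply: setSU; apply: take_sub; lia.
- rewrite cardsU_disj; last exact: (X_disj _ hd hUS).
  rewrite cardTake //; lia.
Qed.

Lemma S3_lem (T : finType) (M : matroid T) (S : {set T}) (xs : seq T) :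
  paving M -> basis M S -> 1 <= rank M -> uniq xs -> {in xs, forall x, x \notin S} -> rank M <= size xs ->
  ~ (forall s, s \in S -> [set s] \in Hfam M S xs) /\ S \notin Hfam M S xs.
Proof.
move=> hp hSb hr hu hd hs.
have hSc := rank_basis hSb.
split; last by rewrite (Hfam_P hp hu hd hs) hSc ltnn !andbF.
move=> hall.
set X := [set y in take (rank M - 1) xs].
have hXc : #|X| = rank M - 1 by rewrite /X; apply: cardTake => //; lia.
case/andP: (hSb) => hSi _.
have hXi : indep M X by apply: small_indep => //; lia.
have hXc' : #|X|.+1 = rank M by lia.
have hV : forall v, v \in S -> v \notin X -> ~~ indep M (v |: X).
  move=> v vS _; move: (hall v vS); rewrite (Hfam_P hp hu hd hs) cards1.
  by rewrite setUC => /and4P [].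
by have := degen hXi hXc' hV (subxx S) hSc; rewrite hSi.
Qed.

Lemma set_cat (T : finType) (s1 s2 : seq T) :
  [set x in s1 ++ s2] = [set x in s1] :|: [set x in s2].
Proof. by apply/setP=> y; rewrite !inE mem_cat. Qed.

Lemma set_rev (T : finType) (s : seq T) : [set x in rev s] = [set x in s].
Proof. by apply/setP=> y; rewrite !inE mem_rev. Qed.

Lemma rot_all (T : Type) (P : seq T -> Prop) (s : seq T) : 0 < size s ->
  (forall k, k < size s -> P (rot k s)) -> forall n, P (rot n s).
Proof.
move=> h0 h n; case: (ltnP n (size s)) => hn; first exact: h.
by rewrite rot_oversize // -(rot0 s); apply: h.
Qed.

Lemma rot_rot_ex (T : Type) k n (s : seq T) : exists n', rot k (rot n s) = rot n' s.
Proof.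
case: (leqP n (size s)) => hn; last by rewrite (rot_oversize (ltnW hn)); exists k.
case: (leqP k (size s)) => hk; last by rewrite rot_oversize ?size_rot ?(ltnW hk) //; exists n.
by rewrite rot_add_mod //; eexists.
Qed.

Lemma rot_cat_small (T : Type) k (s1 s2 : seq T) : k <= size s1 ->
  rot k (s1 ++ s2) = drop k s1 ++ s2 ++ take k s1.
Proof.
move=> h; rewrite /rot drop_cat take_cat catA.
case: ltnP => h2; first by [].
have -> : k = size s1 by lia.
by rewrite subnn drop0 take0 cats0 drop_size take_size.
Qed.

Lemma rot_cat_big (T : Type) k (s1 s2 : seq T) : size s1 <= k ->
  rot k (s1 ++ s2) = drop (k - size s1) s2 ++ s1 ++ take (k - size s1) s2.
Proof.
move=> h; rewrite /rot drop_cat take_cat.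
by case: ltnP => h2 //; lia.
Qed.

Lemma window_wrap (T : finType) (ys : seq T) a c : a + c <= size ys ->
  [set x in take (a + c) (rot (size ys - a) ys)] =
  [set x in take a (rev ys)] :|: [set x in take c ys].
Proof.
move=> h; rewrite /rot take_cat size_drop.
have ha : a <= size ys by lia.
rewrite (_ : size ys - (size ys - a) = a); last by lia.
rewrite ltnNge leq_addr /= set_cat take_rev set_rev.
by rewrite (_ : a + c - a = c) ?take_takel //; lia.
Qed.

Lemma subset_card_ex (T : finType) (W : {set T}) k : k <= #|W| ->
  exists2 D : {set T}, D \subset W & #|D| = k.
Proof.
move=> h; have : 0 < #|[set A : {set T} | A \subset W & #|A| == k]|.
  by rewrite cards_draws bin_gt0.
by case/card_gt0P=> D; rewrite inE => /andP [h1 /eqP h2]; exists D.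
Qed.

Lemma deg_fam (T : finType) (M : matroid T) (S : {set T}) (xs : seq T) (W : {set T}) n :
  paving M -> basis M S -> uniq xs -> {in xs, forall x, x \notin S} -> rank M <= size xs ->
  W \subset S -> #|W|.+1 = rank M -> 1 <= n < rank M ->
  (forall D : {set T}, D \subset W -> #|D| = n -> D \in Hfam M S xs) ->
  forall I : {set T}, I \subset [set x in take (rank M - n) xs] :|: W -> #|I| = rank M -> ~~ indep M I.
Proof.
move=> hp hSb hu hd hs hWS hWc hn hall.
have [D0 hD0W hD0c] : exists2 D0 : {set T}, D0 \subset W & #|D0| = n by apply: subset_card_ex; lia.
have [d dD0] : exists d, d \in D0 by apply/card_gt0P; lia.
set X := [set x in take (rank M - n) xs].
have hXc : #|X| = rank M - n by rewrite /X; apply: cardTake => //; lia.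
have hDd : #|D0 :\ d| = n.-1 by move: hD0c; rewrite (cardsD1 d) dD0; lia.
have hDdS : D0 :\ d \subset S by apply: subset_trans (subD1set _ _) (subset_trans hD0W hWS).
have dj : X :&: (D0 :\ d) = set0 by exact: (X_disj _ hd hDdS).
apply: (@degen _ M (X :|: (D0 :\ d))).
- apply: small_indep => //; rewrite cardsU_disj //; lia.
- rewrite cardsU_disj //; lia.
- move=> v /setUP [vX | vW]; rewrite in_setU negb_or => /andP [vXn vI].
    by rewrite vX in vXn.
  have hD' : v |: (D0 :\ d) \subset W.
    by rewrite subUset sub1set vW (subset_trans (subD1set _ _) hD0W).
  have hD'c : #|v |: (D0 :\ d)| = n by rewrite cardsU1 vI hDd; lia.
  have := hall _ hD' hD'c; rewrite (Hfam_P hp hu hd hs) hD'c => /and4P [_ _ _].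
  by rewrite setUCA.
Qed.

Lemma S4_lem (T : finType) (M : matroid T) (S : {set T}) (ys : seq T) :
  paving M -> basis M S -> uniq ys -> {in ys, forall x, x \notin S} -> rank M <= size ys ->
  (forall n, basis M [set x in take (rank M) (rot n ys)]) ->
  forall k x, 1 <= k <= #|S| - 1 -> x \in S ->
     (forall D : {set T}, D \subset S :\ x -> #|D| = k -> D \in Hfam M S (rev ys)) ->
     ~ (forall D : {set T}, D \subset S :\ x -> #|D| = #|S| - k -> D \in Hfam M S ys).
Proof.
move=> hp hSb hu hd hs hys k x hk xS h1 h2.
have hSc := rank_basis hSb.
rewrite hSc in hk h2.
have hur : uniq (rev ys) by rewrite rev_uniq.
have hdr : {in rev ys, forall x, x \notin S} by move=> y; rewrite mem_rev; exact: hd.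
have hsr : rank M <= size (rev ys) by rewrite size_rev.
have hWS : S :\ x \subset S by exact: subD1set.
have hWc : #|S :\ x|.+1 = rank M by move: hSc; rewrite (cardsD1 x) xS; lia.
have d1 := deg_fam hp hSb hur hdr hsr hWS hWc (n := k) ltac:(lia) h1.
have d2 := deg_fam hp hSb hu hd hs hWS hWc (n := rank M - k) ltac:(lia) h2.
rewrite (_ : rank M - (rank M - k) = k) in d2; last by lia.
set Xa := [set y in take (rank M - k) (rev ys)] in d1.
set Yk := [set y in take k ys] in d2.
have hw := hys (size ys - (rank M - k)).
rewrite -{1}(_ : rank M - k + k = rank M) in hw; last by lia.
rewrite window_wrap in hw; last by lia.
have hWi : indep M (S :\ x) by apply: small_indep => //; lia.
have hcard : #|Xa :|: Yk| = rank M by exact: rank_basis hw.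
have hV : forall v, v \in Xa :|: Yk :|: (S :\ x) -> v \notin S :\ x -> ~~ indep M (v |: (S :\ x)).
  move=> v /setUP [/setUP [vX|vY] | vW] vn; last by rewrite vW in vn.
  - apply: d1; last by rewrite cardsU1 vn; lia.
    by rewrite subUset sub1set inE vX subsetUr.
  - apply: d2; last by rewrite cardsU1 vn; lia.
    by rewrite subUset sub1set inE vY subsetUr.
have := degen hWi hWc hV (subsetUl (Xa :|: Yk) (S :\ x)) hcard.
by case/andP: hw => ->.
Qed.

Lemma size_dropT (T : finType) n (s : seq T) : size (drop n s) = size s - n.
Proof. exact: size_drop. Qed.

Lemma size_catT (T : finType) (s1 s2 : seq T) : size (s1 ++ s2) = size s1 + size s2.
Proof. exact: size_cat. Qed.

Lemma OC_lem (T : finType) (M : matroid T) (S : {set T}) (ys : seq T) :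
  paving M -> basis M S -> 1 <= rank M -> uniq ys -> {in ys, forall x, x \notin S} -> rank M <= size ys ->
  (forall n, basis M [set x in take (rank M) (rot n ys)]) ->
  (forall s : seq T, uniq s -> [set x in s] = S ->
     ~ (forall n, basis M [set x in take (rank M) (rot n (s ++ ys))])) ->
  order_consistent S (Hfam M S (rev ys)) (Hfam M S ys).
Proof.
move=> hp hSb hr hu hd hs hys hnot s hus hsS.
apply: NNPP => hno.
have hSc := rank_basis hSb.
have hsz : size s = rank M by rewrite -hSc -hsS cardsE; apply/esym/card_uniqP.
have hur : uniq (rev ys) by rewrite rev_uniq.
have hdr : {in rev ys, forall x, x \notin S} by move=> y; rewrite mem_rev; exact: hd.
have hsr : rank M <= size (rev ys) by rewrite size_rev.
have hsubS : forall s' : seq T, {subset s' <= s} -> [set x in s'] \subset S.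
  by move=> s' h; apply/subsetP=> y; rewrite inE -hsS inE => /h.
have h1 : forall c, 1 <= c < rank M ->
    indep M ([set x in take (rank M - c) (rev ys)] :|: [set x in take c s]).
  move=> c hc; apply/negPn/negP=> hdep; apply: hno; exists c; first lia.
  left; rewrite (Hfam_P hp hur hdr hsr) hsubS; last by move=> y; exact: mem_take.
  rewrite cardTake ?hsz //; last lia.
  by rewrite hdep; apply/andP; split; lia.
have h2 : forall c, 1 <= c < rank M ->
    indep M ([set x in take c ys] :|: [set x in drop c s]).
  move=> c hc; apply/negPn/negP=> hdep; apply: hno; exists c.+1; first lia.
  right; rewrite (Hfam_P hp hu hd hs) hsubS /=; last by move=> y; exact: mem_drop.
  have hdc : #|[set x in drop c s]| = rank M - c.
    by rewrite cardsE; have /card_uniqP -> := drop_uniq c hus; rewrite size_dropT hsz.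
  rewrite hdc (_ : rank M - (rank M - c) = c); last by lia.
  by rewrite hdep; apply/andP; split; lia.
apply: (hnot s hus hsS).
have hut : uniq (s ++ ys).
  rewrite cat_uniq hus hu andbT; apply/hasPn=> y yys; apply/negP=> ys'.
  by move: (hd y yys); rewrite -hsS inE ys'.
apply: (@rot_all _ (fun t => basis M [set x in take (rank M) t])); first by rewrite size_catT hsz; lia.
move=> k; rewrite size_catT hsz => hk.
apply: indep_basis; last first.
  by apply: cardTake; rewrite ?rot_uniq // size_rot size_catT hsz; lia.
case: (leqP (rank M) k) => hkr.
  rewrite rot_cat_big hsz //.
  set a := k - rank M.
  case: (leqP (a + rank M) (size ys)) => ha.
    rewrite takel_cat; last by rewrite size_dropT; lia.
    have := hys a; rewrite /rot takel_cat; last by rewrite size_dropT; lia.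
    by case/andP.
  rewrite take_cat size_dropT ltnNge (_ : size ys - a <= rank M) /=; last by lia.
  rewrite takel_cat ?hsz; last by lia.
  have hc : 1 <= rank M - (size ys - a) < rank M by rewrite /a; lia.
  have := h1 _ hc.
  rewrite take_rev set_cat (_ : size ys - (rank M - (rank M - (size ys - a))) = a) ?set_rev //.
  rewrite /a; lia.
case: (posnP k) => hk0.
  rewrite hk0 rot0 takel_cat ?hsz // -hsz take_size hsS.
  by case/andP: hSb.
rewrite rot_cat_small ?hsz; last by lia.
rewrite take_cat size_dropT hsz ltnNge (_ : rank M - k <= rank M) /=; last by lia.
rewrite takel_cat; last by lia.
rewrite (_ : rank M - (rank M - k) = k); last by lia.
by rewrite set_cat setUC; apply: h2; lia.
Qed.

Theorem mainTheorem10 (T : finType) (M : matroid T) (S : {set T})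
    (es : seq T) (j : nat) :
  paving M -> 3 <= rank M -> basis M S ->
  rank M <= size es -> cyclic_ordering M (~: S) es ->
  (forall i, 1 <= i <= size es -> forall p : seq T, perm_eq p (enum S) ->
     ~ cyclic_ordering M [set: T] (take i es ++ p ++ drop i es)) ->
  1 <= j <= size es ->
  spair S (Hfam M S (rev (rot j.-1 es))) (Hfam M S (rot j.-1 es)) /\
  order_consistent S (Hfam M S (rev (rot j.-1 es))) (Hfam M S (rot j.-1 es)).
Proof.
move=> hp hr3 hSb hm [hue hes hwin] hnot hj.
have hr : 1 <= rank M by lia.
have hSc := rank_basis hSb.
have hdes : {in es, forall x, x \notin S}.
  move=> y yes; have : y \in [set x in es] by rewrite inE.
  by rewrite hes inE.
set ys := rot j.-1 es.
have hu : uniq ys by rewrite rot_uniq.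
have hd : {in ys, forall x, x \notin S} by move=> y; rewrite mem_rot; exact: hdes.
have hs : rank M <= size ys by rewrite size_rot.
have hes0 : 0 < size es by lia.
have hys : forall n, basis M [set x in take (rank M) (rot n ys)].
  move=> n; have [n' ->] := rot_rot_ex n j.-1 es.
  exact: (@rot_all _ (fun t => basis M [set x in take (rank M) t]) es hes0 hwin).
have hur : uniq (rev ys) by rewrite rev_uniq.
have hdr : {in rev ys, forall x, x \notin S} by move=> y; rewrite mem_rev; exact: hd.
have hsr : rank M <= size (rev ys) by rewrite size_rev.
split.
  split.
  - apply/andP; split; apply/subsetP=> D; rewrite powersetE.
      by rewrite (Hfam_P hp hur hdr hsr) => /and4P [].
    by rewrite (Hfam_P hp hu hd hs) => /and4P [].
  - move=> Si [->|->]; [exact: S1_lem | exact: S1_lem].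
  - move=> Si [->|->]; [exact: S2_lem | exact: S2_lem].
  - move=> Si [->|->]; [exact: S3_lem | exact: S3_lem].
  - exact: S4_lem.
apply: OC_lem => // s hus hsS hall.
set i0 := if j.-1 == 0 then size es else j.-1.
have hi0 : 1 <= i0 <= size es by rewrite /i0; case: eqP; lia.
have hyi : rot i0 es = ys.
  rewrite /ys /i0; case: eqP => [->|//]; by rewrite rot0 rot_size.
apply: (hnot i0 hi0 s).
  apply: uniq_perm => //; first exact: enum_uniq.
  by move=> y; rewrite mem_enum -hsS inE.
set q := take i0 es ++ s ++ drop i0 es.
have hq : rot i0 q = s ++ ys.
  rewrite -hyi /q -{1}(size_takel (s := es) (ltac:(lia) : i0 <= size es)).
  by rewrite rot_size_cat -catA.
have hqe : q = rot (size (s ++ ys) - i0) (s ++ ys).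
  by rewrite -hq -/(rotr i0 (rot i0 q)) rotK.
have hut : uniq (s ++ ys).
  rewrite cat_uniq hus hu andbT; apply/hasPn=> y yys; apply/negP=> ys'.
  by move: (hd y yys); rewrite -hsS inE ys'.
split.
- by rewrite -(rot_uniq i0) hq.
- apply/setP=> y; rewrite !inE -(mem_rot i0) hq mem_cat.
  case yS: (y \in S).
    have : y \in [set x in s] by rewrite hsS.
    by rewrite inE => ->.
  rewrite /ys mem_rot orbC; have : y \in ~: S by rewrite inE yS.
  by rewrite -hes inE => ->.
- move=> k _; rewrite hqe; have [n' ->] := rot_rot_ex k (size (s ++ ys) - i0) (s ++ ys).
  exact: hall.
Qed.
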